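(* Let $h(x) := \log\Gamma(x)$ for $x>0$. For arbitrary $x>0$, \[ -\frac{1}{8x} - \frac{1}{24x(4x^2-1)_+} < h(x+1/2) - h(x) - \frac{\log x}{2} < -\frac{1}{8(x+1/2)} . \]
   Context: $(y)_+ := \max(y,0)$; for $0 < x \le 1/2$ the term $\frac{1}{24x(4x^2-1)_+}$ is interpreted as $+\infty$, so the lower bound is then $-\infty$. *)

(* Defs.v *)
From Stdlib Require Import Reals.
From Coquelicot Require Import Coquelicot.
Open Scope R_scope.

Definition Gamma (x : R) : R :=
  RInt_gen (fun t => Rpower t (x - 1) * exp (- t))
           (at_right 0) (Rbar_locally p_infty).

Definition h (x : R) : R := ln (Gamma x).

Definition posp (y : R) : R := Rmax y 0.

(* Main.v *)
Require Import Defs.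
From Stdlib Require Import Reals Lra.
From Coquelicot Require Import Coquelicot.
Open Scope R_scope.

Lemma ev_pos_prod (P : R -> R -> Prop) :
  (forall a b, 0 < a -> 0 < b -> P a b) ->
  filter_prod (at_right 0) (Rbar_locally p_infty) (fun ab => P (fst ab) (snd ab)).
Proof.
  intros H. apply Filter_prod with (Q := fun a => 0 < a) (R := fun b => 0 < b).
  - exists (mkposreal 1 Rlt_0_1). intros; assumption.
  - exists 0. intros; assumption.
  - intros; simpl; auto.
Qed.

Lemma minmax_pos a b x : 0 < a -> 0 < b -> Rmin a b <= x <= Rmax a b -> 0 < x.
Proof. intros Ha Hb [H1 _]. assert (0 < Rmin a b) by (apply Rmin_glb_lt; auto). lra. Qed.

Lemma L1 (F g : R -> R) (La Lb : R) :
  (forall t, 0 < t -> is_derive F t (g t) /\ continuous g t) ->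
  filterlim F (at_right 0) (locally La) ->
  filterlim F (Rbar_locally p_infty) (locally Lb) ->
  is_RInt_gen g (at_right 0) (Rbar_locally p_infty) (Lb - La).
Proof.
  intros Hd HA HB. unfold is_RInt_gen.
  apply filterlimi_lim_ext_loc with (f := fun ab => F (snd ab) - F (fst ab)).
  - apply (ev_pos_prod (fun a b => is_RInt g a b (F b - F a))).
    intros a b Ha Hb. apply (is_RInt_derive F g).
    + intros x Hx. apply Hd. exact (minmax_pos a b x Ha Hb Hx).
    + intros x Hx. apply Hd. exact (minmax_pos a b x Ha Hb Hx).
  - apply (filterlim_comp_2 (G := locally Lb) (H := locally (opp La)) (fun ab => F (snd ab)) (fun ab => opp (F (fst ab))) plus).
    + eapply filterlim_comp. apply filterlim_snd. exact HB.
    + eapply filterlim_comp. eapply filterlim_comp. apply filterlim_fst. exact HA. apply (@filterlim_opp R_AbsRing R_NormedModule).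
    + apply (@filterlim_plus R_AbsRing R_NormedModule).
Qed.

Lemma exRI (f : R -> R) a b : (forall t, 0 < t -> continuous f t) -> 0 < a -> 0 < b -> ex_RInt f a b.
Proof.
  intros Hc Ha Hb. apply (@ex_RInt_continuous R_CompleteNormedModule). intros z Hz. apply Hc. exact (minmax_pos a b z Ha Hb Hz).
Qed.

Lemma RInt_dom (f G g : R -> R) x y :
  (forall t, 0 < t -> continuous f t) ->
  (forall t, 0 < t -> is_derive G t (g t) /\ continuous g t) ->
  (forall t, 0 < t -> Rabs (f t) <= g t) ->
  0 < x -> 0 < y -> Rabs (RInt f x y) <= Rabs (G y - G x).
Proof.
  intros Hc Hd Hle.
  assert (key : forall x y, 0 < x -> 0 < y -> x <= y -> Rabs (RInt f x y) <= Rabs (G y - G x)).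
  { clear x y. intros x y Hx Hy Hxy.
    assert (Hcg : forall t, 0 < t -> continuous g t) by (intros; apply Hd; auto).
    eapply Rle_trans. apply abs_RInt_le; auto. apply exRI; auto.
    eapply Rle_trans. apply (RInt_le (fun t => Rabs (f t)) g); auto.
    - apply exRI; auto. intros t Ht. apply (continuous_comp f Rabs). auto. apply continuous_Rabs.
    - apply exRI; auto.
    - intros t Ht. apply Hle. lra.
    - rewrite (is_RInt_unique g x y (G y - G x)). apply Rle_abs.
      apply (is_RInt_derive G g); intros z Hz; apply Hd; exact (minmax_pos x y z Hx Hy Hz). }
  intros Hx Hy. destruct (Rle_dec x y) as [Hxy|Hxy].
  - apply key; auto.
  - rewrite <- (opp_RInt_swap f y x) by (apply exRI; auto).
    change (Rabs (- RInt f y x) <= Rabs (G y - G x)).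
    rewrite Rabs_Ropp, Rabs_minus_sym. apply key; auto. lra.
Qed.

Lemma L2 (f G g : R -> R) (La Lb : R) :
  (forall t, 0 < t -> continuous f t) ->
  (forall t, 0 < t -> is_derive G t (g t) /\ continuous g t) ->
  (forall t, 0 < t -> Rabs (f t) <= g t) ->
  filterlim G (at_right 0) (locally La) ->
  filterlim G (Rbar_locally p_infty) (locally Lb) ->
  ex_RInt_gen f (at_right 0) (Rbar_locally p_infty).
Proof.
  intros Hc Hd Hle HA HB. unfold ex_RInt_gen, is_RInt_gen.
  refine (proj1 (filterlimi_locally_cauchy (U := R_CompleteSpace) (F := filter_prod (at_right 0) (Rbar_locally p_infty)) (FF := @filter_prod_proper _ _ _ _ (at_right_proper_filter 0) (Rbar_locally_filter p_infty)) (fun ab => is_RInt f (fst ab) (snd ab)) _) _).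
  - apply (ev_pos_prod (fun a b => (exists y, is_RInt f a b y) /\
       forall y1 y2, is_RInt f a b y1 -> is_RInt f a b y2 -> y1 = y2)).
    intros a b Ha Hb. split.
    + exists (RInt f a b). apply (@RInt_correct R_CompleteNormedModule). apply exRI; auto.
    + intros y1 y2 H1 H2. rewrite <- (is_RInt_unique _ _ _ _ H1). apply is_RInt_unique; auto.
  - intros eps.
    assert (e4 : 0 < eps / 4) by (destruct eps; simpl; lra).
    pose proof (HA (ball La (mkposreal _ e4)) (locally_ball La _)) as HA'.
    pose proof (HB (ball Lb (mkposreal _ e4)) (locally_ball Lb _)) as HB'.
    exists (fun ab => (0 < fst ab /\ ball La (eps/4) (G (fst ab))) /\
                      (0 < snd ab /\ ball Lb (eps/4) (G (snd ab)))).
    split.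
    + apply Filter_prod with (Q := fun a => 0 < a /\ ball La (eps/4) (G a))
                             (R := fun b => 0 < b /\ ball Lb (eps/4) (G b)).
      * destruct HA' as [d Hd']. exists d. intros y Hy Hy0. split; [exact Hy0 | apply Hd'; auto].
      * destruct HB' as [M HM]. simpl. exists (Rmax M 0). intros x Hx. split.
        -- pose proof (Rmax_r M 0). lra.
        -- apply HM. pose proof (Rmax_l M 0). lra.
      * intros; simpl; auto.
    + intros [a b] [a' b'] [[Ha HGa] [Hb HGb]] [[Ha' HGa'] [Hb' HGb']] u' v' Hu Hv.
      simpl in *.
      rewrite <- (is_RInt_unique _ _ _ _ Hu), <- (is_RInt_unique _ _ _ _ Hv).
      assert (C1 : RInt f a' b' + RInt f b' b = RInt f a' b)
        by (apply (RInt_Chasles f a' b' b); apply exRI; auto).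
      assert (C2 : RInt f a a' + RInt f a' b = RInt f a b)
        by (apply (RInt_Chasles f a a' b); apply exRI; auto).
      pose proof (RInt_dom f G g a a' Hc Hd Hle Ha Ha') as D1.
      pose proof (RInt_dom f G g b' b Hc Hd Hle Hb' Hb) as D2.
      change (Rabs (G a - La) < eps/4) in HGa.
      change (Rabs (G a' - La) < eps/4) in HGa'.
      change (Rabs (G b - Lb) < eps/4) in HGb.
      change (Rabs (G b' - Lb) < eps/4) in HGb'.
      change (Rabs (RInt f a' b' - RInt f a b) < eps).
      apply Rabs_def2 in HGa. apply Rabs_def2 in HGa'.
      apply Rabs_def2 in HGb. apply Rabs_def2 in HGb'.
      assert (E1 : Rabs (G a' - G a) < eps/2) by (apply Rabs_def1; lra).
      assert (E2 : Rabs (G b - G b') < eps/2) by (apply Rabs_def1; lra).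
      assert (F1 := Rle_lt_trans _ _ _ D1 E1). assert (F2 := Rle_lt_trans _ _ _ D2 E2).
      apply Rabs_def2 in F1. apply Rabs_def2 in F2.
      apply Rabs_def1; lra.
Qed.

Lemma lim0 (G : R -> R) L :
  (forall e, 0 < e -> exists d, 0 < d /\ forall t, 0 < t < d -> Rabs (G t - L) < e) ->
  filterlim G (at_right 0) (locally L).
Proof.
  intros H P [e He]. destruct (H e (cond_pos e)) as [d [Hd Hd']].
  exists (mkposreal d Hd). intros y Hy Hy0. apply He. apply Hd'. split; auto.
  change (Rabs (y - 0) < d) in Hy. rewrite Rminus_0_r, Rabs_pos_eq in Hy; lra.
Qed.

Lemma limI (G : R -> R) L :
  (forall e, 0 < e -> exists M, forall t, M < t -> Rabs (G t - L) < e) ->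
  filterlim G (Rbar_locally p_infty) (locally L).
Proof.
  intros H P [e He]. destruct (H e (cond_pos e)) as [M HM].
  exists M. intros y Hy. apply He. apply HM; auto.
Qed.

Lemma U0 s e : 0 < s -> 0 < e -> exists d, 0 < d /\ forall t, 0 < t < d -> exp (s * ln t) < e.
Proof.
  intros Hs He. exists (exp (ln e / s)). split. apply exp_pos.
  intros t [Ht Htd]. apply ln_increasing in Htd; auto. rewrite ln_exp in Htd.
  rewrite <- (exp_ln e He). apply exp_increasing.
  apply (Rmult_lt_compat_l s) in Htd; auto. field_simplify in Htd; lra.
Qed.

Lemma U1 s A : 0 < s -> 0 < A -> exists M, forall t, M < t -> 0 < t /\ A < exp (s * ln t).
Proof.
  intros Hs HA. exists (exp (ln A / s)). intros t Ht.
  assert (0 < t) by (pose proof (exp_pos (ln A / s)); lra). split; auto.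
  apply ln_increasing in Ht; [|apply exp_pos]. rewrite ln_exp in Ht.
  rewrite <- (exp_ln A HA). apply exp_increasing.
  apply (Rmult_lt_compat_l s) in Ht; auto. field_simplify in Ht; lra.
Qed.

Lemma ln_bound p t : 0 < p -> 0 < t -> p * ln t <= t / 2 + p * (ln (2 * p) - 1).
Proof.
  intros Hp Ht.
  assert (H1 := exp_ineq1_le (ln (t / (2 * p)))).
  rewrite exp_ln in H1 by (apply Rdiv_lt_0_compat; lra).
  unfold Rdiv in H1. rewrite ln_mult, ln_Rinv in H1 by (try apply Rinv_0_lt_compat; lra).
  assert (ln t - ln (2 * p) <= t / (2 * p) - 1) by (unfold Rdiv; lra).
  apply (Rmult_le_compat_l p) in H; [|lra].
  replace (p * (t / (2 * p) - 1)) with (t / 2 - p) in H by (field; lra). lra.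
Qed.

Lemma Rpower_m1 t s : 0 < t -> Rpower t (s - 1) = Rpower t s / t.
Proof.
  intros Ht. unfold Rpower.
  replace ((s - 1) * ln t) with (s * ln t + - ln t) by ring.
  rewrite exp_plus, exp_Ropp, exp_ln by auto. reflexivity.
Qed.

Definition gam (s t : R) : R := Rpower t (s - 1) * exp (- t).

Lemma gam_cont s t : 0 < t -> continuous (gam s) t.
Proof. intros Ht. apply (@ex_derive_continuous R_AbsRing R_NormedModule). unfold gam, Rpower. auto_derive. lra. Qed.

Lemma gam_pos s t : 0 < gam s t.
Proof. unfold gam, Rpower. apply Rmult_lt_0_compat; apply exp_pos. Qed.

Lemma exp_le' x y : x <= y -> exp x <= exp y.
Proof. intros H. destruct (Rle_lt_or_eq_dec _ _ H) as [H'|H']. left; apply exp_increasing; auto. rewrite H'; lra. Qed.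

Lemma gam_ex s : 0 < s -> ex_RInt_gen (gam s) (at_right 0) (Rbar_locally p_infty).
Proof.
  intros Hs.
  set (K := exp (2 * s * (ln (2 * (2 * s)) - 1))).
  assert (HK : 0 < K) by apply exp_pos.
  set (C := (2 + 2 * K) / s).
  assert (HC : 0 < C) by (unfold C; apply Rdiv_lt_0_compat; lra).
  assert (Hu : forall t, 0 < exp (s * ln t)) by (intros; apply exp_pos).
  apply (L2 (gam s) (fun t => - C / (1 + exp (s * ln t)))
            (fun t => C * (s / t * exp (s * ln t)) / (1 + exp (s * ln t)) ^ 2) (- C) 0).
  - intros; apply gam_cont; auto.
  - intros t Ht. split.
    + auto_derive. split; auto. split; auto. specialize (Hu t). lra.
      specialize (Hu t). field. lra.
    + apply (@ex_derive_continuous R_AbsRing R_NormedModule). auto_derive.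
      split; [lra|]. split; auto. specialize (Hu t). nra.
  - intros t Ht. rewrite Rabs_pos_eq by (left; apply gam_pos).
    unfold gam. rewrite Rpower_m1 by auto. unfold Rpower.
    pose proof (Hu t) as Hut.
    set (u := exp (s * ln t)) in *.
    assert (HE : 0 < exp (- t)) by apply exp_pos.
    assert (HE1 : exp (- t) <= 1) by (rewrite <- exp_0; apply exp_le'; lra).
    set (E := exp (- t)) in *.
    assert (HuuE : u * u * E <= K).
    { assert (Eq : u * u * E = exp (2 * s * ln t + - t)).
      { unfold u, E. rewrite !exp_plus. replace (2 * s * ln t) with (s * ln t + s * ln t) by ring.
        rewrite exp_plus. ring. }
      rewrite Eq. unfold K. apply exp_le'.
      pose proof (ln_bound (2 * s) t ltac:(lra) Ht). lra. }
    assert (0 <= (u - 1) ^ 2 * E) by (apply Rmult_le_pos; [apply pow2_ge_0|lra]).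
    assert (Key : E * (1 + u) ^ 2 <= 2 + 2 * K) by nra.
    assert (Eq2 : C * (s / t * u) / (1 + u) ^ 2 - u / t * E
                  = u / (t * (1 + u) ^ 2) * (2 + 2 * K - E * (1 + u) ^ 2)).
    { unfold C. field. split; lra. }
    assert (0 <= u / (t * (1 + u) ^ 2) * (2 + 2 * K - E * (1 + u) ^ 2)).
    { apply Rmult_le_pos; [|lra]. left. apply Rdiv_lt_0_compat; auto.
      apply Rmult_lt_0_compat; auto. apply pow_lt; lra. }
    lra.
  - apply lim0. intros e He.
    destruct (U0 s (e / C) Hs ltac:(apply Rdiv_lt_0_compat; lra)) as [d [Hd Hd']].
    exists d. split; auto. intros t Ht. specialize (Hd' t Ht). pose proof (Hu t).
    replace (- C / (1 + exp (s * ln t)) - - C) with (C * exp (s * ln t) / (1 + exp (s * ln t)))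
      by (field; lra).
    rewrite Rabs_pos_eq.
    2:{ left. apply Rdiv_lt_0_compat; [apply Rmult_lt_0_compat|]; lra. }
    apply Rle_lt_trans with (C * exp (s * ln t)).
    + unfold Rdiv. rewrite <- (Rmult_1_r (C * exp (s * ln t))) at 2.
      apply Rmult_le_compat_l; [nra|]. rewrite <- Rinv_1. apply Rinv_le_contravar; lra.
    + apply (Rmult_lt_compat_l C) in Hd'; auto. replace (C * (e / C)) with e in Hd' by (field; lra). lra.
  - apply limI. intros e He.
    destruct (U1 s (C / e) Hs ltac:(apply Rdiv_lt_0_compat; lra)) as [M HM].
    exists M. intros t Ht. destruct (HM t Ht) as [Ht0 HA]. pose proof (Hu t).
    rewrite Rminus_0_r. unfold Rdiv. rewrite Ropp_mult_distr_l_reverse, Rabs_Ropp. rewrite Rabs_pos_eq.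
    2:{ left. apply Rmult_lt_0_compat; auto. apply Rinv_0_lt_compat; lra. }
    apply Rmult_lt_compat_l with (r := e) in HA; auto.
    replace (e * (C / e)) with C in HA by (field; lra).
    apply Rmult_lt_reg_r with (1 + exp (s * ln t)); [lra|].
    rewrite Rmult_assoc, Rinv_l by lra. nra.
Qed.

Lemma ev_pos_le (P : R -> R -> Prop) :
  (forall a b, 0 < a -> a <= b -> P a b) ->
  filter_prod (at_right 0) (Rbar_locally p_infty) (fun ab => P (fst ab) (snd ab)).
Proof.
  intros H. apply Filter_prod with (Q := fun a => 0 < a /\ a < 1) (R := fun b => 1 < b).
  - exists (mkposreal 1 Rlt_0_1). intros y Hy Hy0. split; auto.
    change (Rabs (y - 0) < 1) in Hy. rewrite Rminus_0_r, Rabs_pos_eq in Hy; lra.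
  - exists 1. intros; assumption.
  - intros x y [Hx Hx1] Hy; simpl. apply H; lra.
Qed.

Lemma is_gen_zero : is_RInt_gen (fun _ => 0) (at_right 0) (Rbar_locally p_infty) 0.
Proof.
  replace 0 with (0 - 0) at 2 by ring.
  apply (L1 (fun _ => 0) (fun _ => 0) 0 0).
  - intros t Ht. split. auto_derive; auto. apply (@continuous_const R_UniformSpace R_UniformSpace).
  - apply lim0. intros e He. exists 1. split. lra. intros. rewrite Rminus_0_r, Rabs_R0; auto.
  - apply limI. intros e He. exists 1. intros. rewrite Rminus_0_r, Rabs_R0; auto.
Qed.

Lemma is_gen_nonneg (g : R -> R) l :
  is_RInt_gen g (at_right 0) (Rbar_locally p_infty) l ->
  (forall t, 0 < t -> 0 <= g t) -> 0 <= l.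
Proof.
  intros H Hg.
  pose proof (@RInt_gen_norm R_CompleteNormedModule _ _ (at_right_proper_filter 0) (Rbar_locally_filter p_infty)
     (fun _ => 0) g 0 l
     (ev_pos_le (fun a b => a <= b) (fun a b _ H => H))
     (ev_pos_le (fun a b => forall x, a <= x <= b -> norm (0:R) <= g x)
        (fun a b Ha Hab x Hx => ltac:(change (Rabs 0 <= g x); rewrite Rabs_R0; apply Hg; lra)))
     is_gen_zero H) as K.
  change (Rabs 0 <= l) in K. rewrite Rabs_R0 in K. exact K.
Qed.

Lemma gam_is s : 0 < s -> is_RInt_gen (gam s) (at_right 0) (Rbar_locally p_infty) (Gamma s).
Proof.
  intros Hs. unfold Gamma. apply (@RInt_gen_correct R_CompleteNormedModule _ _ (Proper_StrongProper _ (at_right_proper_filter 0)) (Proper_StrongProper _ (Rbar_locally_filter p_infty))). apply gam_ex; auto.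
Qed.

Lemma Gamma_ge0 s : 0 < s -> 0 <= Gamma s.
Proof.
  intros Hs. apply (is_gen_nonneg (gam s)). apply gam_is; auto. intros; left; apply gam_pos.
Qed.

Lemma FE s : 0 < s -> Gamma (s + 1) = s * Gamma s.
Proof.
  intros Hs.
  assert (H1 : is_RInt_gen (fun t => s * gam s t - gam (s + 1) t) (at_right 0) (Rbar_locally p_infty) (0 - 0)).
  { apply (L1 (fun t => exp (s * ln t) * exp (- t))).
    - intros t Ht. split.
      + unfold gam. rewrite Rpower_m1 by auto. replace (s + 1 - 1) with s by ring.
        unfold Rpower. auto_derive. lra. change (RinvImpl.Rinv t) with (/ t). field. lra.
      + apply (@ex_derive_continuous R_AbsRing R_NormedModule). unfold gam, Rpower. auto_derive. lra.
    - apply lim0. intros e He. destruct (U0 s e Hs He) as [d [Hd Hd']].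
      exists (Rmin d 1). split. apply Rmin_glb_lt; lra.
      intros t [Ht Htd]. assert (Htd1 : t < d) by (pose proof (Rmin_l d 1); lra).
      specialize (Hd' t (conj Ht Htd1)).
      assert (0 < exp (- t) <= 1) by (split; [apply exp_pos | rewrite <- exp_0; apply exp_le'; lra]).
      pose proof (exp_pos (s * ln t)).
      rewrite Rminus_0_r, Rabs_pos_eq by nra. nra.
    - apply limI. intros e He.
      set (c := s * (ln (2 * s) - 1)).
      exists (Rmax 1 (2 * (c - ln e))). intros t Ht.
      assert (Ht1 : 0 < t) by (pose proof (Rmax_l 1 (2 * (c - ln e))); lra).
      assert (Ht2 : 2 * (c - ln e) < t) by (pose proof (Rmax_r 1 (2 * (c - ln e))); lra).
      rewrite Rminus_0_r, Rabs_pos_eq.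
      2:{ left. apply Rmult_lt_0_compat; apply exp_pos. }
      rewrite <- exp_plus. rewrite <- (exp_ln e He). apply exp_increasing.
      pose proof (ln_bound s t Hs Ht1). unfold c in *. lra. }
  assert (H2 := is_RInt_gen_scal (Fa := at_right 0) (Fb := Rbar_locally p_infty) _ s _ (gam_is s Hs)).
  assert (H3 := is_RInt_gen_minus (Fa := at_right 0) (Fb := Rbar_locally p_infty) _ _ _ _ H2 H1).
  assert (H4 : is_RInt_gen (gam (s + 1)) (at_right 0) (Rbar_locally p_infty) (s * Gamma s)).
  { replace (s * Gamma s) with (minus (scal s (Gamma s)) (0 - 0)).
    2:{ unfold minus, plus, opp, scal; simpl. unfold mult; simpl. ring. }
    eapply is_RInt_gen_ext; [| exact H3].
    apply (ev_pos_prod (fun a b => forall x, Rmin a b < x < Rmax a b -> _ = _)).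
    intros a b Ha Hb x Hx. unfold minus, plus, opp, scal; simpl. unfold mult; simpl. ring. }
  change (RInt_gen (gam (s + 1)) (at_right 0) (Rbar_locally p_infty) = s * Gamma s).
  apply (is_RInt_gen_unique (Fa := at_right 0) (Fb := Rbar_locally p_infty)); auto.
Qed.

Lemma Gamma1 : Gamma 1 = 1.
Proof.
  assert (H1 : is_RInt_gen (fun t => exp (- t)) (at_right 0) (Rbar_locally p_infty) (0 - - 1)).
  { apply (L1 (fun t => - exp (- t))).
    - intros t Ht. split.
      + auto_derive; auto. ring.
      + apply (@ex_derive_continuous R_AbsRing R_NormedModule). auto_derive. auto.
    - apply lim0. intros e He. exists e. split; auto. intros t [Ht Hte].
      pose proof (exp_ineq1_le (- t)).
      assert (exp (- t) <= 1) by (rewrite <- exp_0; apply exp_le'; lra).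
      rewrite Rabs_pos_eq; lra.
    - apply limI. intros e He. exists (- ln e). intros t Ht.
      rewrite Rminus_0_r, Rabs_Ropp, Rabs_pos_eq by (left; apply exp_pos).
      rewrite <- (exp_ln e He). apply exp_increasing. lra. }
  change (RInt_gen (gam 1) (at_right 0) (Rbar_locally p_infty) = 1).
  apply (is_RInt_gen_unique (Fa := at_right 0) (Fb := Rbar_locally p_infty)); auto.
  assert (H2 : is_RInt_gen (gam 1) (at_right 0) (Rbar_locally p_infty) (0 - - 1)).
  { eapply is_RInt_gen_ext; [| exact H1].
    apply (ev_pos_prod (fun a b => forall x, Rmin a b < x < Rmax a b -> _ = _)).
    intros a b Ha Hb x Hx. unfold gam, Rpower. replace (1 - 1) with 0 by ring.
    rewrite Rmult_0_l, exp_0. match goal with |- ?a = ?b => change (@eq R a b) end. ring. }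
  replace (0 - - 1) with 1 in H2 by ring. exact H2.
Qed.

Lemma Gamma_nat_pos n : 0 < Gamma (INR n + 1).
Proof.
  induction n.
  - simpl. rewrite Rplus_0_l, Gamma1. lra.
  - rewrite S_INR. rewrite FE. apply Rmult_lt_0_compat; auto.
    pose proof (pos_INR n); lra. pose proof (pos_INR n); lra.
Qed.

Lemma quad_lemma A M B : 0 <= A -> (forall l, 0 <= l ^ 2 * A + 2 * l * M + B) -> M ^ 2 <= A * B.
Proof.
  intros HA H. destruct (Rle_lt_or_eq_dec _ _ HA) as [HA'|HA'].
  - specialize (H (- M / A)).
    assert (E : (- M / A) ^ 2 * A + 2 * (- M / A) * M + B = B - M ^ 2 / A) by (field; lra).
    rewrite E in H.
    assert (M ^ 2 / A <= B) by lra.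
    apply (Rmult_le_compat_l A) in H0; [|lra].
    replace (A * (M ^ 2 / A)) with (M ^ 2) in H0 by (field; lra). lra.
  - subst A. destruct (Req_dec M 0) as [HM|HM].
    + subst M. specialize (H 0). nra.
    + specialize (H (- (B + 1) / (2 * M))).
      replace ((- (B + 1) / (2 * M)) ^ 2 * 0 + 2 * (- (B + 1) / (2 * M)) * M + B) with (-1) in H
        by (field; auto). lra.
Qed.

Lemma CS a b : 0 < a -> 0 < b -> Gamma ((a + b) / 2) ^ 2 <= Gamma a * Gamma b.
Proof.
  intros Ha Hb. set (m := (a + b) / 2). assert (Hm : 0 < m) by (unfold m; lra).
  apply quad_lemma. apply Gamma_ge0; auto.
  intros l.
  pose proof (is_RInt_gen_scal (Fa := at_right 0) (Fb := Rbar_locally p_infty) _ (l ^ 2) _ (gam_is a Ha)) as Ia.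
  pose proof (is_RInt_gen_scal (Fa := at_right 0) (Fb := Rbar_locally p_infty) _ (2 * l) _ (gam_is m Hm)) as Im.
  pose proof (is_RInt_gen_plus (Fa := at_right 0) (Fb := Rbar_locally p_infty) _ _ _ _ Ia Im) as Iam.
  pose proof (is_RInt_gen_plus (Fa := at_right 0) (Fb := Rbar_locally p_infty) _ _ _ _ Iam (gam_is b Hb)) as I.
  apply is_gen_nonneg in I.
  - revert I. unfold plus, scal; simpl. unfold mult; simpl. intros I. lra.
  - intros t Ht. unfold plus, scal; simpl. unfold mult; simpl.
    unfold gam, Rpower.
    set (A := exp ((a - 1) / 2 * ln t)). set (B := exp ((b - 1) / 2 * ln t)).
    assert (EA : exp ((a - 1) * ln t) = A * A) by (unfold A; rewrite <- exp_plus; f_equal; field).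
    assert (EB : exp ((b - 1) * ln t) = B * B) by (unfold B; rewrite <- exp_plus; f_equal; field).
    assert (EM : exp ((m - 1) * ln t) = A * B) by (unfold A, B, m; rewrite <- exp_plus; f_equal; field).
    rewrite EA, EB, EM.
    pose proof (exp_pos (- t)).
    match goal with |- 0 <= ?X => replace X with ((l * A + B) ^ 2 * exp (- t)) by ring end.
    apply Rmult_le_pos; [apply pow2_ge_0 | lra].
Qed.

Lemma Gamma_pos s : 0 < s -> 0 < Gamma s.
Proof.
  intros Hs. destruct (INR_unbounded s) as [n Hn].
  set (b := 2 * (INR n + 1) - s).
  assert (Hb : 0 < b) by (unfold b; lra).
  pose proof (CS s b Hs Hb) as H.
  replace ((s + b) / 2) with (INR n + 1) in H by (unfold b; field).
  pose proof (Gamma_nat_pos n). pose proof (Gamma_ge0 s Hs). pose proof (Gamma_ge0 b Hb).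
  destruct (Rle_lt_or_eq_dec _ _ H1) as [|E]; auto.
  rewrite <- E in H. nra.
Qed.

Lemma ln_le_m1 z : 0 < z -> ln z <= z - 1.
Proof. intros Hz. pose proof (exp_ineq1_le (ln z)). rewrite exp_ln in H; lra. Qed.

Definition fx (x : R) := h (x + 1 / 2) - h x - ln x / 2.

Lemma h_FE s : 0 < s -> h (s + 1) = ln s + h s.
Proof. intros Hs. unfold h. rewrite FE by auto. rewrite ln_mult; auto. apply Gamma_pos; auto. Qed.

Lemma fx_le0 x : 0 < x -> fx x <= 0.
Proof.
  intros Hx. pose proof (CS x (x + 1) Hx ltac:(lra)) as H.
  replace ((x + (x + 1)) / 2) with (x + 1 / 2) in H by field.
  rewrite FE in H by auto.
  pose proof (Gamma_pos x Hx). pose proof (Gamma_pos (x + 1/2) ltac:(lra)).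
  apply ln_le in H; [| apply pow_lt; auto].
  replace (Gamma x * (x * Gamma x)) with (x * (Gamma x * Gamma x)) in H by ring.
  simpl in H. rewrite Rmult_1_r in H.
  rewrite !ln_mult in H by (try apply Rmult_lt_0_compat; auto).
  unfold fx, h. lra.
Qed.

Lemma fx_ge x : 0 < x -> - (1 / (8 * x)) - 1 / (8 * x) <= fx x.
Proof.
  intros Hx. pose proof (CS (x + 1/2) (x + 3/2) ltac:(lra) ltac:(lra)) as H.
  replace ((x + 1 / 2 + (x + 3 / 2)) / 2) with (x + 1) in H by field.
  replace (x + 3 / 2) with ((x + 1 / 2) + 1) in H by field.
  rewrite !FE in H by lra.
  pose proof (Gamma_pos x Hx). pose proof (Gamma_pos (x + 1/2) ltac:(lra)).
  apply ln_le in H; [| apply pow_lt; apply Rmult_lt_0_compat; auto].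
  simpl in H. rewrite Rmult_1_r in H.
  replace (Gamma (x + 1 / 2) * ((x + 1 / 2) * Gamma (x + 1 / 2)))
    with ((x + 1 / 2) * (Gamma (x + 1 / 2) * Gamma (x + 1 / 2))) in H by ring.
  replace (x * Gamma x * (x * Gamma x)) with (x * x * (Gamma x * Gamma x)) in H by ring.
  rewrite !ln_mult in H by (try apply Rmult_lt_0_compat; lra).
  pose proof (ln_le_m1 ((x + 1/2) / x) ltac:(apply Rdiv_lt_0_compat; lra)) as L.
  unfold Rdiv at 1 in L. rewrite ln_mult, ln_Rinv in L by (try apply Rinv_0_lt_compat; lra).
  replace ((x + 1 / 2) / x - 1) with (1 / (2 * x)) in L by (field; lra).
  replace (- (1 / (8 * x)) - 1 / (8 * x)) with (- (1 / (2 * x)) / 2) by (field; lra).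
  unfold fx, h. lra.
Qed.

Lemma fx_step x : 0 < x -> fx (x + 1) = fx x + (ln (x + 1 / 2) - (ln x + ln (x + 1)) / 2).
Proof.
  intros Hx. unfold fx.
  replace (x + 1 + 1 / 2) with ((x + 1 / 2) + 1) by ring.
  rewrite !h_FE by lra. field.
Qed.

Lemma d_lower x : 0 < x -> 1 / (8 * (x + 1 / 2) ^ 2) <= ln (x + 1 / 2) - (ln x + ln (x + 1)) / 2.
Proof.
  intros Hx. set (y := x + 1 / 2).
  assert (Hy : 0 < y) by (unfold y; lra).
  pose proof (ln_le_m1 (x * (x + 1) / (y * y))) as L.
  assert (0 < x * (x + 1) / (y * y)) by (apply Rdiv_lt_0_compat; nra).
  specialize (L H). unfold Rdiv at 1 in L.
  rewrite ln_mult, ln_mult, ln_Rinv, ln_mult in L by (try apply Rinv_0_lt_compat; nra).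
  replace (x * (x + 1) / (y * y) - 1) with (- (2 * (1 / (8 * y ^ 2)))) in L by (unfold y; field; lra).
  lra.
Qed.

Lemma d_upper x : 0 < x -> ln (x + 1 / 2) - (ln x + ln (x + 1)) / 2 <= 1 / (8 * x) - 1 / (8 * (x + 1)).
Proof.
  intros Hx. set (y := x + 1 / 2).
  assert (Hy : 0 < y) by (unfold y; lra).
  pose proof (ln_le_m1 (y * y / (x * (x + 1)))) as L.
  assert (0 < y * y / (x * (x + 1))) by (apply Rdiv_lt_0_compat; nra).
  specialize (L H). unfold Rdiv at 1 in L.
  rewrite ln_mult, ln_mult, ln_Rinv, ln_mult in L by (try apply Rinv_0_lt_compat; nra).
  replace (y * y / (x * (x + 1)) - 1) with (2 * (1 / (8 * x) - 1 / (8 * (x + 1)))) in L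
    by (unfold y; field; lra).
  lra.
Qed.

Lemma upper_ind n : forall x, 0 < x -> fx x + 1 / (8 * (x + 1 / 2)) <= 1 / (8 * (x + INR n + 1 / 2)).
Proof.
  induction n; intros x Hx.
  - simpl. rewrite Rplus_0_r. pose proof (fx_le0 x Hx). lra.
  - pose proof (IHn (x + 1) ltac:(lra)) as I. rewrite fx_step in I by auto.
    pose proof (d_lower x Hx) as D.
    rewrite S_INR. replace (x + (INR n + 1) + 1 / 2) with (x + 1 + INR n + 1 / 2) by ring.
    assert (1 / (8 * (x + 1 / 2)) - 1 / (8 * (x + 1 + 1 / 2)) <= 1 / (8 * (x + 1 / 2) ^ 2)).
    { replace (1 / (8 * (x + 1 / 2)) - 1 / (8 * (x + 1 + 1 / 2)))
        with (1 / (8 * (x + 1 / 2) ^ 2) * ((x + 1 / 2) / (x + 3 / 2))) by (field; lra).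
      rewrite <- (Rmult_1_r (1 / (8 * (x + 1 / 2) ^ 2))) at 2.
      apply Rmult_le_compat_l. left. apply Rdiv_lt_0_compat. lra. nra.
      apply (Rmult_le_reg_r (x + 3/2)). lra. unfold Rdiv. rewrite Rmult_assoc, Rinv_l; lra. }
    lra.
Qed.

Lemma lower_ind n : forall x, 0 < x -> - (1 / (8 * x)) - 1 / (8 * (x + INR n)) <= fx x.
Proof.
  induction n; intros x Hx.
  - simpl. rewrite Rplus_0_r. apply fx_ge; auto.
  - pose proof (IHn (x + 1) ltac:(lra)) as I. rewrite fx_step in I by auto.
    pose proof (d_upper x Hx) as D.
    rewrite S_INR. replace (x + (INR n + 1)) with (x + 1 + INR n) by ring. lra.
Qed.

Lemma inv_lt a b : 0 < a -> a < b -> 1 / b < 1 / a.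
Proof. intros Ha Hab. unfold Rdiv. rewrite !Rmult_1_l. apply Rinv_lt_contravar; nra. Qed.

Theorem lemma12 (x : R) (hx : 0 < x) :
  (0 < posp (4 * x ^ 2 - 1) ->
     - (1 / (8 * x)) - 1 / (24 * x * posp (4 * x ^ 2 - 1))
       < h (x + 1 / 2) - h x - ln x / 2)
  /\ h (x + 1 / 2) - h x - ln x / 2 < - (1 / (8 * (x + 1 / 2))).
Proof.
  change (h (x + 1 / 2) - h x - ln x / 2) with (fx x).
  split.
  - intros Hp.
    assert (HP : posp (4 * x ^ 2 - 1) = 4 * x ^ 2 - 1).
    { unfold posp, Rmax. destruct (Rle_dec (4 * x ^ 2 - 1) 0); auto.
      unfold posp, Rmax in Hp. destruct (Rle_dec (4 * x ^ 2 - 1) 0); lra. }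
    rewrite HP in *. set (P := 4 * x ^ 2 - 1) in *.
    destruct (INR_unbounded (24 * x * P)) as [n Hn].
    pose proof (lower_ind n x hx) as Q.
    assert (1 / (8 * (x + INR n)) < 1 / (24 * x * P)).
    { apply inv_lt. apply Rmult_lt_0_compat; [lra|auto].
      assert (0 < 24 * x * P) by (apply Rmult_lt_0_compat; lra). lra. }
    lra.
  - set (y := x + 1 / 2).
    assert (Hy : 0 < y) by (unfold y; lra).
    destruct (INR_unbounded (y ^ 2 * (y + 1))) as [n Hn].
    pose proof (upper_ind n (x + 1) ltac:(lra)) as I.
    rewrite fx_step in I by auto.
    pose proof (d_lower x hx) as D. fold y in D.
    replace (x + 1 + INR n + 1 / 2) with (y + 1 + INR n) in I by (unfold y; ring).
    replace (x + 1 + 1 / 2) with (y + 1) in I by (unfold y; ring).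
    assert (A1 : 1 / (8 * (y + 1 + INR n)) < 1 / (8 * (y ^ 2 * (y + 1)))).
    { apply inv_lt. apply Rmult_lt_0_compat; [lra|]. apply Rmult_lt_0_compat; [apply pow_lt|]; lra.
      pose proof (pos_INR n). nra. }
    assert (A2 : 1 / (8 * (y ^ 2 * (y + 1))) = 1 / (8 * y ^ 2) + 1 / (8 * (y + 1)) - 1 / (8 * y))
      by (field; lra).
    fold y in I. lra.
Qed.
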